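(* Let $G$ be a connected Lie group with identity $e$ and consider a discrete-time linear control system on $G$ with control range $U\subset\mathbb{R}^m$ a compact neighborhood of $0$. Let $H$ be a connected Lie subgroup of $G$ and suppose there is a neighborhood $B$ of $e$ in $H$ with $B\subset H\cap\mathcal{R}$ which is invariant under $f_0$ and $f_0^{-1}$. Then $H$ is $f_0$-invariant and $H\subset\mathcal{R}$.
   Context: A discrete-time linear control system on $G$ is given by $f:G\times U\to G$, $f_u:=f(\cdot,u)$, such that $f_0$ is an automorphism of $G$ and $f_u(g)=f_u(e)f_0(g)$ for all $g\in G,u\in U$. Solutions: $\varphi(0,g,u)=g$, $\varphi(k,g,u)=f_{u_{k-1}}\circ\cdots\circ f_{u_0}(g)$ for $u=(u_i)\in U^{\mathbb{N}_0}$; $\mathcal{R}=\bigcup_{k\in\mathbb{N}}\{\varphi(k,e,u)\}$. A set $S$ is invariant under a map $\psi$ if $\psi(S)\subset S$. *)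

(* Defs.v *)
From HB Require Import structures.
From mathcomp Require Import all_boot all_order all_algebra.
From mathcomp Require Import all_classical all_reals all_analysis.
Set Implicit Arguments. Unset Strict Implicit. Unset Printing Implicit Defensive.
Import Order.TTheory GRing.Theory Num.Theory.
Local Open Scope classical_set_scope.

Definition is_group (G : Type) (mul : G -> G -> G) (inv : G -> G) (e : G) : Prop :=
  [/\ forall x y z, mul x (mul y z) = mul (mul x y) z,
      forall x, mul e x = x,
      forall x, mul x e = x,
      forall x, mul (inv x) x = e &
      forall x, mul x (inv x) = e].

(* Hausdorff topological group (stand-in for "Lie group"). *)
Definition is_topgroup (G : topologicalType) (mul : G -> G -> G) (inv : G -> G)
  (e : G) : Prop :=
  [/\ is_group mul inv e,
      continuous (fun p : G * G => mul p.1 p.2),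
      continuous inv &
      hausdorff_space G].

Definition is_hom (G H : Type) (mulG : G -> G -> G) (mulH : H -> H -> H)
  (phi : G -> H) : Prop := forall x y, phi (mulG x y) = mulH (phi x) (phi y).

Definition is_top_automorphism (G : topologicalType) (mul : G -> G -> G)
  (phi : G -> G) : Prop :=
  is_hom mul mul phi /\ continuous phi /\
  exists psi : G -> G, cancel phi psi /\ cancel psi phi /\ continuous psi.

Definition linear_control_system (G : topologicalType) (mul : G -> G -> G)
  (e : G) (C : Type) (U : set C) (zero : C) (f : G -> C -> G) : Prop :=
  is_top_automorphism mul (fun g => f g zero) /\
  forall u g, U u -> f g u = mul (f e u) (f g zero).

Fixpoint sol (G C : Type) (f : G -> C -> G) (k : nat) (g : G) (u : nat -> C)
  : G :=
  match k with
  | 0 => g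
  | k'.+1 => f (sol f k' g u) (u k')
  end.

Definition reachable (G C : Type) (U : set C) (f : G -> C -> G) (e : G) : set G :=
  [set x | exists k : nat, exists u : nat -> C,
      (0 < k)%N /\ (forall i, U (u i)) /\ x = sol f k e u].

(* Main.v *)
Require Import Defs.
From HB Require Import structures.
From mathcomp Require Import all_boot all_order all_algebra.
From mathcomp Require Import all_classical all_reals all_analysis.
Import Order.TTheory GRing.Theory Num.Theory.
Import numFieldNormedType.Exports.
Local Open Scope classical_set_scope.

Lemma pre_nbhs (T S: topologicalType) (g : T -> S) x A :
  {for x, continuous g} -> nbhs (g x) A -> nbhs x (g @^-1` A).
Proof. by move=> c; apply: c. Qed.

Lemma cont2 (T S V : topologicalType) (m : T -> S -> V) (a : T -> T) (b : T -> S) :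
  continuous (fun p : T * S => m p.1 p.2) -> continuous a -> continuous b ->
  continuous (fun y => m (a y) (b y)).
Proof.
move=> hm ha hb y.
apply: (continuous_comp (f := fun y => (a y, b y)) (g := fun p : T * S => m p.1 p.2)).
  by apply: cvg_pair; [exact: ha | exact: hb].
exact: hm.
Qed.

Lemma sol_ext (G C : Type) (f : G -> C -> G) k g u v :
  (forall i, (i < k)%N -> u i = v i) -> sol f k g u = sol f k g v.
Proof.
elim: k => [//|k IH] H /=.
by rewrite IH ?H // => i Hi; apply: H; apply: ltnW.
Qed.

Lemma sol_cat (G C : Type) (f : G -> C -> G) k l g u :
  sol f (k + l) g u = sol f k (sol f l g u) (fun i => u (i + l)).
Proof. by elim: k => [//|k IH]; rewrite addSn /= IH. Qed.

Lemma sol_mul (G C : Type) (mul : G -> G -> G) (inv : G -> G) (e : G)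
  (U : set C) (z : C) (f : G -> C -> G) :
  is_group mul inv e -> is_hom mul mul (fun g => f g z) ->
  (forall u g, U u -> f g u = mul (f e u) (f g z)) ->
  forall k g u, (forall i, U (u i)) ->
  sol f k g u = mul (sol f k e u) (iter k (fun g => f g z) g).
Proof.
move=> [As L1 R1 _ _] hom Hs; elim => [|k IH] g u Hu /=; first by rewrite L1.
rewrite Hs // IH // hom As -Hs //.
Qed.

Fixpoint Bn (H : Type) (mulH : H -> H -> H) (B : set H) (n : nat) : set H :=
  match n with
  | 0 => B
  | n'.+1 => [set z | exists s b, Bn H mulH B n' s /\ B b /\ z = mulH s b]
  end.
Arguments Bn {H}.

Theorem corollary2p17
  (R : realType) (m : nat)
  (G : topologicalType) (mul : G -> G -> G) (inv : G -> G) (e : G)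
  (HG : is_topgroup mul inv e) (Gconn : connected [set: G])
  (U : set 'rV[R]_m) (Ucpt : compact U) (Unbhs : nbhs (0%R : 'rV[R]_m) U)
  (f : G -> 'rV[R]_m -> G)
  (Hsys : linear_control_system mul e U 0%R f)
  (H : topologicalType) (mulH : H -> H -> H) (invH : H -> H) (eH : H)
  (HH : is_topgroup mulH invH eH) (Hconn : connected [set: H])
  (iota : H -> G) (iota_inj : injective iota) (iota_hom : is_hom mulH mul iota)
  (iota_cont : continuous iota)
  (B : set H) (B_nbhs : nbhs eH B)
  (B_R : iota @` B `<=` reachable U f e)
  (B_f0 : (fun g => f g 0%R) @` (iota @` B) `<=` iota @` B)
  (B_f0inv : (fun g => f g 0%R) @^-1` (iota @` B) `<=` iota @` B) :
  (fun g => f g 0%R) @` (range iota) `<=` range iota /\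
  range iota `<=` reachable U f e.
Proof.
set f0 := fun g => f g 0%R.
have [[f0hom [_ [psi [f0K [psiK _]]]]] Hs] := Hsys.
have [HgrpG _ _ _] := HG.
have [[AsH L1H R1H LVH RVH] mulHc invHc _] := HH.
pose S := [set x | exists n, Bn mulH B n x].
have SB : forall s b, S s -> B b -> S (mulH s b).
  by move=> s b [n Hn] Bb; exists n.+1; exists s, b.
have eqinv : forall s y, y = mulH s (mulH (invH s) y).
  by move=> s y; rewrite AsH RVH L1H.
have ST : S = setT.
  apply: Hconn.
  - by exists eH; exists 0%N; apply: nbhs_singleton.
  - exists S; last by rewrite setTI.
    rewrite openE => s Ss; rewrite /interior.
    pose g := fun y => mulH (invH s) y.
    have gc : continuous g.
      by apply: (@cont2 _ _ _ mulH (fun=> invH s) id) => // z; [exact: cst_continuous | exact: cvg_id].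
    have N : nbhs s (g @^-1` B) by apply: gc; rewrite /g LVH.
    move: N; apply: filterS => y /= By.
    by rewrite (eqinv s y); apply: SB.
  - exists (closure S); first exact: closed_closure.
    rewrite setTI; apply/seteqP; split; first exact: subset_closure.
    move=> x Cx.
    pose g := fun y => mulH (invH y) x.
    have gc : continuous g.
      by apply: (@cont2 _ _ _ mulH invH (fun=> x)) => // z; exact: cst_continuous.
    have N : nbhs x (g @^-1` B) by apply: gc; rewrite /g LVH.
    have [s [Ss /= Bs]] := Cx _ N.
    by rewrite (eqinv s x); apply: SB.
have C1 : forall n x, Bn mulH B n x -> range iota (f0 (iota x)).
  elim => [|n IH] x /=.
    move=> Bx; have [b Bb Hb] := B_f0 _ (ex_intro2 _ _ (iota x) (ex_intro2 _ _ x Bx erefl) erefl).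
    by exists b.
  move=> [s [b [Bs [Bb ->]]]].
  rewrite iota_hom /f0 f0hom.
  have [s' _ Hs'] := IH s Bs.
  have [b' Bb' Hy] := B_f0 _ (ex_intro2 _ _ (iota b) (ex_intro2 _ _ b Bb erefl) erefl).
  exists (mulH s' b') => //.
  by rewrite iota_hom Hs' Hy.
have Hpsi : forall k z, (iota @` B) z ->
    (iota @` B) (iter k psi z) /\ iter k f0 (iter k psi z) = z.
  elim => [//|k IH] z Bz; have [IH1 IH2] := IH z Bz.
  split; last by rewrite iterSr /= /f0 psiK.
  rewrite iterS; apply: B_f0inv; rewrite /= psiK //.
have C2 : forall n x, Bn mulH B n x -> reachable U f e (iota x).
  elim => [|n IH] x /=; first by move=> Bx; apply: B_R; exists x.
  move=> [s [b [Bs [Bb ->]]]].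
  have [k [u [k0 [Uu Hsu]]]] := IH s Bs.
  have [Py Hy] := Hpsi k (iota b) (ex_intro2 _ _ b Bb erefl).
  set y := iter k psi (iota b) in Py Hy.
  have [k' [u' [k'0 [Uu' Hyu]]]] := B_R _ Py.
  pose w := fun i => if (i < k')%N then u' i else u (i - k').
  exists (k + k')%N, w; split; first by rewrite addn_gt0 k0.
  split; first by move=> i; rewrite /w; case: ifP.
  rewrite sol_cat iota_hom Hsu -Hy.
  rewrite -(@sol_mul _ _ mul inv e U 0%R f HgrpG f0hom Hs) //.
  rewrite (@sol_ext _ _ f k' e w u'); last by move=> i Hi; rewrite /w Hi.
  rewrite -Hyu; apply: sol_ext => i _.
  by rewrite /w ltnNge leq_addl /= addnK.
split.
  move=> z [g [h _ <-] <-].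
  have : S h by rewrite ST.
  by move=> [n Hn]; apply: (C1 n).
move=> z [h _ <-].
have : S h by rewrite ST.
by move=> [n Hn]; apply: (C2 n).
Qed.
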